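(* Let $n\in\mathbb{Z}_{++}$, let $G=[g_{ij}]\in\mathbb{R}_+^{n\times n}$ be an entrywise nonnegative matrix, and let $\alpha,p\in\mathbb{R}$ with $\alpha\ge p$, $\beta\in[0,1)$ and $\delta\in(0,1)$. Assume the spectral radius of $G$ satisfies $\rho(G)\le \Lambda_{\max}$ for some $0<\Lambda_{\max}<\frac{1}{\delta(1+\beta)}$. For seeding vectors $\bar{\mathbf s},\underline{\mathbf s}\in\mathbb{R}^n_+$ define the sequences $\bar{\mathbf x}(k),\underline{\mathbf x}(k)\in\mathbb{R}^n$, $k\in\mathbb{Z}_+$, by $\bar{\mathbf x}(0)=\bar{\mathbf s}$, $\underline{\mathbf x}(0)=\underline{\mathbf s}$ and $$\bar{\mathbf x}(k+1)=(\alpha-p)\mathbf 1_n+G\bar{\mathbf x}(k)+\beta G\underline{\mathbf x}(k),\qquad \underline{\mathbf x}(k+1)=(\alpha-p)\mathbf 1_n+G\underline{\mathbf x}(k)+\beta G\bar{\mathbf x}(k),$$ and define the utilities $$\bar{\mathfrak U}(\bar{\mathbf s},\underline{\mathbf s})=p\sum_{k=0}^{\infty}\delta^k\mathbf 1_n^\top\bar{\mathbf x}(k)-\tfrac12\|\bar{\mathbf s}\|_2^2,\qquad \underline{\mathfrak U}(\bar{\mathbf s},\underline{\mathbf s})=p\sum_{k=0}^{\infty}\delta^k\mathbf 1_n^\top\underline{\mathbf x}(k)-\tfrac12\|\underline{\mathbf s}\|_2^2.$$ Let $\mathbf c=[c_1,\dots,c_n]^\top=\tfrac12\big(I_n-\delta(1-\beta)G^\top\big)^{-1}\mathbf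 1_n+\tfrac12\big(I_n-\delta(1+\beta)G^\top\big)^{-1}\mathbf 1_n$. Then for every $i\in[n]$, $$\frac{\partial\bar{\mathfrak U}}{\partial\bar s_i}=p\,c_i-\bar s_i,\qquad \frac{\partial\underline{\mathfrak U}}{\partial\underline s_i}=p\,c_i-\underline s_i.$$
   Context: $\mathbf 1_n$ is the all-ones vector in $\mathbb{R}^n$, $[n]=\{1,\dots,n\}$. The vector $(I_n-aG^\top)^{-1}\mathbf 1_n$ is the Katz–Bonacich centrality of $G$ with attenuation factor $a$. Interpretation: $\bar x_i(k)$ and $\underline x_i(k)$ are agent $i$'s consumption of the products of firm $a$ and firm $b$ at time $k$, and $\bar{\mathbf s},\underline{\mathbf s}$ are the two firms' seedings. *)

(* Defs.v *)
From HB Require Import structures.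
From mathcomp Require Import all_boot all_order all_algebra.
From mathcomp Require Import all_classical all_reals all_analysis.
From mathcomp Require Import complex.
Set Implicit Arguments. Unset Strict Implicit. Unset Printing Implicit Defensive.
Import Order.TTheory GRing.Theory Num.Theory.
Local Open Scope ring_scope.

Definition spectral_radius_le (R : realType) (n : nat) (G : 'M[R]_n) (L : R) :=
  forall z : R[i], root (map_poly (fun x : R => (x%:C)%C) (char_poly G)) z ->
    `|z| <= (L%:C)%C.

Definition ones (R : ringType) (n : nat) : 'cV[R]_n := const_mx 1.

Fixpoint xpair (R : realType) (n : nat) (G : 'M[R]_n) (alpha p beta : R)
    (sb su : 'cV[R]_n) (k : nat) : 'cV[R]_n * 'cV[R]_n :=
  match k with
  | 0 => (sb, su)
  | k'.+1 =>
      let xb := (xpair G alpha p beta sb su k').1 in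
      let xu := (xpair G alpha p beta sb su k').2 in
      ((alpha - p) *: ones R n + G *m xb + beta *: (G *m xu),
       (alpha - p) *: ones R n + G *m xu + beta *: (G *m xb))
  end.

Definition xbar R n G alpha p beta sb su k :=
  (@xpair R n G alpha p beta sb su k).1.
Definition xunder R n G alpha p beta sb su k :=
  (@xpair R n G alpha p beta sb su k).2.

Definition sum_entries (R : ringType) (n : nat) (x : 'cV[R]_n) : R :=
  \sum_(i < n) x i 0.

Definition sqnorm2 (R : ringType) (n : nat) (x : 'cV[R]_n) : R :=
  \sum_(i < n) (x i 0) ^+ 2.

Definition Ubar (R : realType) (n : nat) (G : 'M[R]_n) (alpha p beta delta : R)
    (sb su : 'cV[R]_n) : R :=
  p * (limn (fun N : nat => \sum_(0 <= k < N) (delta ^+ k * sum_entries (xbar G alpha p beta sb su k))))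
  - 2^-1 * sqnorm2 sb.

Definition Uunder (R : realType) (n : nat) (G : 'M[R]_n) (alpha p beta delta : R)
    (sb su : 'cV[R]_n) : R :=
  p * (limn (fun N : nat => \sum_(0 <= k < N) (delta ^+ k * sum_entries (xunder G alpha p beta sb su k))))
  - 2^-1 * sqnorm2 su.

Definition cvec (R : realType) (n : nat) (G : 'M[R]_n) (beta delta : R) : 'cV[R]_n :=
  2^-1 *: (invmx (1%:M - (delta * (1 - beta)) *: G^T) *m ones R n)
  + 2^-1 *: (invmx (1%:M - (delta * (1 + beta)) *: G^T) *m ones R n).

(* Main.v *)
Require Import Defs.
From HB Require Import structures.
From mathcomp Require Import all_boot all_order all_algebra.
From mathcomp Require Import all_classical all_reals all_analysis.
From mathcomp Require Import complex.
From mathcomp Require Import ring lra.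
Import Order.TTheory GRing.Theory Num.Theory.
Import numFieldNormedType.Exports.
Local Open Scope classical_set_scope.
Local Open Scope ring_scope.


Lemma geo_step (F : numFieldType) (a b : nat -> F) (lam r s C : F) :
  0 <= r -> r < s -> `|lam| <= r -> 0 <= C ->
  (forall k, a k.+1 = lam * a k + b k) -> (forall k, `|b k| <= C * s ^+ k) ->
  forall k, `|a k| <= (`|a 0%N| + C / (s - r)) * s ^+ k.
Proof.
move=> r0 rs lr C0 ha hb.
have sr : 0 < s - r by rewrite subr_gt0.
have s0 : 0 <= s by rewrite (le_trans r0) // ltW.
set D := _ + _.
have D0 : 0 <= D by rewrite addr_ge0 // divr_ge0 // ltW.
elim=> [|k IH]; first by rewrite expr0 mulr1 lerDl divr_ge0 // ltW.
rewrite ha (le_trans (ler_normD _ _)) //.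
have h1 : `|lam * a k| <= r * (D * s ^+ k).
  by rewrite normrM ler_pM.
have h2 : r * (D * s ^+ k) + C * s ^+ k <= D * s ^+ k.+1.
  have -> : r * (D * s ^+ k) + C * s ^+ k = (r * D + C) * s ^+ k by ring.
  rewrite exprS mulrA; apply: ler_wpM2r; first exact: exprn_ge0.
  have -> : D * s = r * D + (s - r) * D by ring.
  rewrite lerD2l /D mulrDr mulrCA divff ?mulr1 ?gt_eqF //.
  by rewrite lerDr mulr_ge0 // ltW.
exact: le_trans (lerD h1 (hb k)) h2.
Qed.
Lemma core (F : numClosedFieldType) (m : nat) (M : 'M[F]_m.+1) (r s : F) :
  0 <= r -> r < s -> forall ls : seq F, (forall l, l \in ls -> `|l| <= r) ->
  forall X : 'M[F]_m.+1, horner_mx M (\prod_(l <- ls) ('X - l%:P)) *m X = 0 ->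
  forall i j, exists D, 0 <= D /\ forall k, `|(M ^+ k *m X) i j| <= D * s ^+ k.
Proof.
move=> r0 rs; elim=> [|l ls IH] hl X hX i j.
  move: hX; rewrite big_nil rmorph1 mul1mx => ->.
  by exists 0; split=> // k; rewrite mulmx0 mxE normr0 mul0r.
move: hX; rewrite big_cons mulrC rmorphM /= -mulmxA rmorphB /= horner_mx_X horner_mx_C.
set X' := (M - l%:M) *m X => hX.
have [|D' [D'0 hD']] := IH _ X' hX i j.
  by move=> l' hl'; apply: hl; rewrite inE hl' orbT.
have sr : 0 < s - r by rewrite subr_gt0.
exists (`|(M ^+ 0 *m X) i j| + D' / (s - r)); split.
  by rewrite addr_ge0 // divr_ge0 // ltW.
apply: (@geo_step F (fun k => (M ^+ k *m X) i j) (fun k => (M ^+ k *m X') i j) l r s D') => //.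
  by apply: hl; rewrite inE eqxx.
move=> k; rewrite exprSr -mulmxE -mulmxA.
have -> : M *m X = X' + l *: X.
  by rewrite /X' mulmxBl mul_scalar_mx addrNK.
by rewrite mulmxDr -scalemxAr !mxE addrC mulrC.
Qed.


Lemma normC_real (R : rcfType) (x : R) : `|(x%:C)%C| = (`|x|%:C)%C.
Proof. by rewrite normc_def /= expr0n /= addr0 sqrtr_sqr. Qed.

Lemma map_mx_exp (R S : comNzRingType) (f : {rmorphism R -> S}) m (A : 'M[R]_m) k :
  map_mx f (A ^+ k) = (map_mx f A) ^+ k.
Proof.
elim: k => [|k IH]; first by rewrite !expr0 map_mx1.
by rewrite !exprS -!mulmxE map_mxM IH.
Qed.

Lemma pow_bound (R : realType) m (G : 'M[R]_m.+1) (L s : R) :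
  spectral_radius_le G L -> 0 <= L -> L < s ->
  forall i j, exists D, 0 <= D /\ forall k, `|(G ^+ k) i j| <= D * s ^+ k.
Proof.
move=> hrho L0 Ls i j.
pose Gc := map_mx (real_complex R) G.
have [rs Hrs] := closed_field_poly_normal (char_poly Gc).
have lc : lead_coef (char_poly Gc) = 1 by apply/monicP; exact: char_poly_monic.
rewrite lc scale1r in Hrs.
have hl : forall l, l \in rs -> `|l| <= (L%:C)%C.
  move=> l hl; apply: hrho.
  by rewrite map_char_poly -/Gc Hrs root_prod_XsubC.
have CH := Cayley_Hamilton Gc.
rewrite Hrs in CH.
have [|||D [D0 hD]] := @core _ _ Gc (L%:C)%C (s%:C)%C _ _ rs hl 1 _ i j.
- by rewrite lecR.
- by rewrite ltcR.
- by rewrite CH mul0mx.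

have [d hd] : exists d, D = (d%:C)%C by apply/complex_realP; rewrite ger0_real.
rewrite {}hd in D0 hD.
exists d; split; first by rewrite -lecR.
move=> k; move: (hD k).
rewrite mulmx1 /Gc -map_mx_exp mxE normC_real.
by rewrite -rmorphXn -rmorphM lecR.
Qed.


Lemma cvg_sum_ord (R : realType) m (f : 'I_m -> nat -> R) (l : 'I_m -> R) :
  (forall i, f i @ \oo --> l i) ->
  (fun N => \sum_i f i N) @ \oo --> \sum_i l i.
Proof.
move=> h; apply: cvg_big => //; first exact: add_continuous.
Qed.

Lemma pow_cvg0 (R : realType) m (G : 'M[R]_m.+1) (L g : R) :
  spectral_radius_le G L -> 0 <= L -> 0 < g -> g * L < 1 ->
  forall i j, (fun N => ((g *: G) ^+ N) i j) @ \oo --> 0.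
Proof.
move=> hrho L0 g0 gL i j.
pose s := (L + g^-1) / 2.
have Ls : L < s.
  rewrite /s ltr_pdivlMr // mulrDr mulr1 ltrD2l -(ltr_pM2l g0) mulfV ?gt_eqF //.
have gs1 : g * s < 1.
  rewrite /s mulrA ltr_pdivrMr // mulrDr mulfV ?gt_eqF // mul1r. lra.
have gs0 : 0 <= g * s by rewrite mulr_ge0 // ?ltW // (le_lt_trans L0).
have [D [D0 hD]] := @pow_bound R m G L s hrho L0 Ls i j.
apply/norm_cvg0P.
apply: (@squeeze_cvgr _ _ _ _ (cst 0) (fun N => D * (g * s) ^+ N)).
- near=> N; rewrite normr_ge0 /= exprZn mxE normrM normrX gtr0_norm //.
  rewrite exprMn mulrCA ler_wpM2l // ?exprn_ge0 ?ltW //.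
- exact: cvg_cst.
- rewrite -(mulr0 D); apply: cvgMl_tmp; apply: cvg_expr.
  by rewrite ger0_norm.
Unshelve. all: by end_near. Qed.

Lemma unit_lemma (R : realType) m (G : 'M[R]_m) (L g : R) :
  spectral_radius_le G L -> 0 < g -> g * L < 1 ->
  (1%:M - g *: G) \in unitmx.
Proof.
move=> hrho g0 gL; rewrite unitmxE unitfE; apply/negP => /det0P [v v0 hv].
have ev : eigenvalue G g^-1.
  apply/eigenvalueP; exists v; last by [].
  have h1 : v = g *: (v *m G).
    by move/eqP: hv; rewrite mulmxBr mulmx1 -scalemxAr subr_eq0 => /eqP.
  by rewrite {2}h1 scalerA mulVf ?gt_eqF // scale1r.
move: ev; rewrite eigenvalue_root_char => /(rmorph_root (real_complex R)) /hrho.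
rewrite normC_real lecR gtr0_norm ?invr_gt0 // => h.
have : 1 <= g * L by rewrite -(mulfV (lt0r_neq0 g0)) ler_pM2l.
by rewrite leNgt gL.
Qed.


Lemma series_inv (R : realType) m (M : 'M[R]_m) :
  (1%:M - M) \in unitmx ->
  (forall i j, (fun N => (M ^+ N) i j) @ \oo --> 0) ->
  forall i j, (fun N => (\sum_(0 <= k < N) M ^+ k) i j) @ \oo --> invmx (1%:M - M) i j.
Proof.
move=> hu hc.
have tel : forall N, (\sum_(0 <= k < N) M ^+ k) *m (1%:M - M) = 1%:M - M ^+ N.
  elim=> [|N IH]; first by rewrite big_nil mul0mx expr0 subrr.
  by rewrite big_nat_recr //= mulmxDl IH mulmxBr mulmx1 exprSr -mulmxE addrA subrK.
have SN : forall N, \sum_(0 <= k < N) M ^+ k = (1%:M - M ^+ N) *m invmx (1%:M - M).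
  by move=> N; rewrite -tel mulmxK.
move=> i j.
rewrite (_ : (fun N => _) = (fun N => invmx (1%:M - M) i j -
    \sum_l (M ^+ N) i l * invmx (1%:M - M) l j)); last first.
  by apply/funext => N; rewrite SN mulmxBl mul1mx !mxE.
rewrite -[X in _ --> X]subr0.
apply: cvgB; first exact: cvg_cst.
rewrite [X in _ --> X](_ : 0 = \sum_(l < m) 0 * invmx (1%:M - M) l j); last by rewrite big1 // => l _; rewrite mul0r.
apply: cvg_sum_ord => l.
exact: cvgMr_tmp.
Qed.
Arguments series_inv {R m M}.


Lemma xpair_swap (R : realType) n (G : 'M[R]_n) a p b sb su k :
  xpair G a p b su sb k = ((xpair G a p b sb su k).2, (xpair G a p b sb su k).1).
Proof. by elim: k => [|k IH] //=; rewrite IH. Qed.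

Lemma xpair_lin (R : realType) n (G : 'M[R]_n) a p b sb su (e : 'cV[R]_n) t k :
  xpair G a p b (sb + t *: e) su k =
  ((xpair G a p b sb su k).1 + t *: (xpair G p p b e 0 k).1,
   (xpair G a p b sb su k).2 + t *: (xpair G p p b e 0 k).2).
Proof.
elim: k => [|k IH] /=; first by rewrite scaler0 addr0.
rewrite IH /= subrr scale0r !add0r.
set x1 := (xpair G a p b sb su k).1; set x2 := (xpair G a p b sb su k).2.
set y1 := (xpair G p p b e 0 k).1; set y2 := (xpair G p p b e 0 k).2.
set c := (a - p) *: ones R n.
rewrite !mulmxDr -!scalemxAr !scalerDr !scalerA (mulrC b t).
congr (_, _).
  rewrite !addrA; congr (_ + _); rewrite -!addrA; congr (_ + _); rewrite !addrA.
  by rewrite addrAC.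
rewrite !addrA; congr (_ + _); rewrite -!addrA; congr (_ + _); rewrite !addrA.
by rewrite addrAC.
Qed.

Lemma ypm (R : realType) n (G : 'M[R]_n) p b (e : 'cV[R]_n) k :
  (xpair G p p b e 0 k).1 + (xpair G p p b e 0 k).2 = ((1 + b) *: G) ^+ k *m e /\
  (xpair G p p b e 0 k).1 - (xpair G p p b e 0 k).2 = ((1 - b) *: G) ^+ k *m e.
Proof.
elim: k => [|k [IH1 IH2]] /=; first by rewrite !expr0 !mul1mx subr0 addr0.
rewrite subrr scale0r !add0r !exprS -!mulmxE -!mulmxA -IH1 -IH2.
set y1 := (xpair G p p b e 0 k).1; set y2 := (xpair G p p b e 0 k).2.
rewrite -!scalemxAl !mulmxDr ?mulmxBr ?mulmxN.
by split; apply/matrixP => r c; rewrite !mxE; ring.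
Qed.


Lemma mulmx_ge0 (R : realType) n (A : 'M[R]_n) (x : 'cV[R]_n) :
  (forall i j, 0 <= A i j) -> (forall i, 0 <= x i 0) -> forall i, 0 <= (A *m x) i 0.
Proof. by move=> hA hx i; rewrite mxE sumr_ge0 // => j _; rewrite mulr_ge0. Qed.
Arguments mulmx_ge0 {R n A x}.

Lemma expmx_ge0 (R : realType) n (A : 'M[R]_n) :
  (forall i j, 0 <= A i j) -> forall k i j, 0 <= (A ^+ k) i j.
Proof.
move=> hA; elim=> [|k IH] i j; first by rewrite expr0 mxE ler0n.
by rewrite exprS -mulmxE mxE sumr_ge0 // => l _; rewrite mulr_ge0.
Qed.

Lemma xpair_ge0 (R : realType) n (G : 'M[R]_n) (a p b : R) (sb su : 'cV[R]_n) :
  (forall i j, 0 <= G i j) -> p <= a -> 0 <= b ->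
  (forall i, 0 <= sb i 0) -> (forall i, 0 <= su i 0) ->
  forall k i, 0 <= (xpair G a p b sb su k).1 i 0 /\ 0 <= (xpair G a p b sb su k).2 i 0.
Proof.
move=> hG hap hb hsb hsu; elim=> [|k IH] i /=; first by split.
have h1 : forall i, 0 <= (xpair G a p b sb su k).1 i 0 by move=> j; case: (IH j).
have h2 : forall i, 0 <= (xpair G a p b sb su k).2 i 0 by move=> j; case: (IH j).
have hc : 0 <= ((a - p) *: ones R n) i 0 by rewrite !mxE mulr1 subr_ge0.
have g1 := mulmx_ge0 hG h1 i; have g2 := mulmx_ge0 hG h2 i.
move: hc g1 g2; rewrite !mxE => hc g1 g2.
by split; rewrite !addr_ge0 // mulr_ge0.
Qed.

Lemma lim_ge0 (R : realType) (f : nat -> R) l :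
  f @ \oo --> l -> (forall N, 0 <= f N) -> 0 <= l.
Proof.
move=> hf h0; rewrite -(cvg_lim _ hf) //; apply: limr_ge; first exact: cvgP hf.
by near=> N; apply: h0.
Unshelve. all: by end_near. Qed.
Arguments lim_ge0 {R f l}. Arguments xpair_ge0 {R n G a p b sb su}. Arguments expmx_ge0 {R n A}.


Lemma geom_le (R : realType) (d : R) N : 0 <= d -> d < 1 ->
  \sum_(0 <= k < N) d ^+ k <= (1 - d)^-1.
Proof.
move=> d0 d1.
have gs : (\sum_(0 <= k < N) d ^+ k) * (1 - d) = 1 - d ^+ N.
  elim: N => [|N IH]; first by rewrite big_nil mul0r expr0 subrr.
  by rewrite big_nat_recr //= mulrDl IH exprSr; ring.
rewrite -[X in X <= _]mulr1 -[X in _ * X](mulfV (x:=1 - d)) ?subr_eq0 ?gt_eqF //.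
rewrite mulrA gs -[X in _ <= X]mul1r; apply: ler_wpM2r.
  by rewrite invr_ge0 subr_ge0 ltW.
by rewrite gerDl oppr_le0 exprn_ge0.
Qed.

Lemma inv_ge0 (R : realType) m (M : 'M[R]_m) :
  (forall i j, 0 <= M i j) -> (1%:M - M) \in unitmx ->
  (forall i j, (fun N => (M ^+ N) i j) @ \oo --> 0) ->
  forall i j, 0 <= invmx (1%:M - M) i j.
Proof.
move=> h0 hu hc i j; apply: lim_ge0 (series_inv hu hc i j) _ => N.
by rewrite summxE sumr_ge0 // => k _; apply: expmx_ge0.
Qed.

Arguments inv_ge0 {R m M}.
Arguments geom_le {R d}.

Lemma xbar_cvg (R : realType) n (G : 'M[R]_n) (a p b d : R) (sb su : 'cV[R]_n) :
  (forall i j, 0 <= G i j) -> p <= a -> 0 <= b -> 0 < d -> d < 1 ->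
  (1%:M - (d * (1 + b)) *: G) \in unitmx ->
  (forall i j, (fun N => (((d * (1 + b)) *: G) ^+ N) i j) @ \oo --> 0) ->
  (forall i, 0 <= sb i 0) -> (forall i, 0 <= su i 0) ->
  cvgn (fun N => \sum_(0 <= k < N) d ^+ k * sum_entries (xbar G a p b sb su k)).
Proof.
move=> hG hap hb d0 d1 hu hc hsb hsu.
set M := (d * (1 + b)) *: G.
have hM : forall i j, 0 <= M i j.
  by move=> i j; rewrite mxE mulr_ge0 // mulr_ge0 ?ltW //; lra.
have hinv := inv_ge0 hM hu hc.
set inv := invmx (1%:M - M) in hinv.
pose x k := xpair G a p b sb su k.
have hx := xpair_ge0 hG hap hb hsb hsu.
pose u k := (x k).1 + (x k).2.
have hu0 : forall k i, 0 <= u k i 0.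
  by move=> k i; rewrite /u mxE; case: (hx k i) => h1 h2; exact: addr_ge0.
pose cc := (d * (2 * (a - p))) *: ones R n.
have hcc : forall i, 0 <= cc i 0.
  by move=> i; rewrite !mxE mulr1; apply: mulr_ge0; [exact: ltW | apply: mulr_ge0 => //; rewrite subr_ge0].
have ustep : forall k, d *: u k.+1 = cc + M *m u k.
  move=> k; rewrite /u /M /= -scalemxAl mulmxDr.
  by apply/matrixP => r c; rewrite !mxE; ring.
pose U N := \sum_(0 <= k < N) d ^+ k *: u k.
have Urec : forall N, U N.+1 = u 0%N + (\sum_(0 <= k < N) d ^+ k) *: cc + M *m U N.
  move=> N.
  have E : \sum_(0 <= k < N) d ^+ k.+1 *: u k.+1 = (\sum_(0 <= k < N) d ^+ k) *: cc + M *m U N.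
    rewrite /U scaler_suml mulmx_sumr -big_split /=; apply: eq_bigr => k _.
    by rewrite exprSr -scalerA ustep scalerDr -scalemxAr.
  by rewrite {1}/U big_nat_recl // expr0 scale1r E addrA.
have Umono : forall N i, U N i 0 <= U N.+1 i 0.
  move=> N i; rewrite /U big_nat_recr //= mxE lerDl mxE mulr_ge0 //.
  by rewrite exprn_ge0 // ltW.
pose h := u 0%N + (1 - d)^-1 *: cc.
have hw : forall N i, ((1%:M - M) *m U N) i 0 <= h i 0.
  move=> N i; rewrite mulmxBl mul1mx.
  apply: (@le_trans _ _ ((U N.+1 - M *m U N) i 0)).
    by rewrite [X in X <= _]mxE [X in _ <= X]mxE lerD2r Umono.
  rewrite Urec addrK /h [X in X <= _]mxE [X in _ <= X]mxE lerD2l.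
  rewrite [X in X <= _]mxE [X in _ <= X]mxE; apply: ler_wpM2r; first exact: hcc.
  by apply: geom_le; rewrite ?ltW.
have hUb : forall N i, U N i 0 <= \sum_l inv i l * h l 0.
  move=> N i; rewrite -[U N](mulKmx hu) mxE; apply: ler_sum => l _.
  by rewrite ler_wpM2l.
apply: nondecreasing_is_cvgn.
  apply/nondecreasing_seqP => N; rewrite big_nat_recr //= lerDl mulr_ge0 //.
    by rewrite exprn_ge0 // ltW.
  by rewrite /sum_entries sumr_ge0 // => i _; case: (hx N i).
exists (\sum_i \sum_l inv i l * h l 0) => _ [N _ <-].
apply: (@le_trans _ _ (\sum_i U N i 0)); last by apply: ler_sum => i _; apply: hUb.
rewrite /U (eq_bigr (fun i => \sum_(0 <= k < N) d ^+ k * u k i 0)); last first.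
  by move=> i _; rewrite summxE; apply: eq_bigr => k _; rewrite mxE.
rewrite exchange_big /=; apply: ler_sum => k _.
rewrite /sum_entries mulr_sumr; apply: ler_sum => i _.
apply: ler_wpM2l; first by rewrite exprn_ge0 // ltW.
rewrite /u mxE /xbar lerDl.
by case: (hx k i).
Qed.


Lemma inv_tr (R : realType) n (G : 'M[R]_n) (c : R) r s :
  invmx (1%:M - c *: G^T) r s = invmx (1%:M - c *: G) s r.
Proof.
have -> : 1%:M - c *: G^T = (1%:M - c *: G)^T.
  by apply/matrixP => x y; rewrite !mxE eq_sym.
by rewrite -trmx_inv mxE.
Qed.

Lemma expZmx (R : realType) n (A : 'M[R]_n) (c : R) k :
  (c *: A) ^+ k = c ^+ k *: A ^+ k.
Proof.
elim: k => [|k IH]; first by rewrite !expr0 scale1r.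
by rewrite !exprS -!mulmxE IH -scalemxAr -scalemxAl scalerA mulrC.
Qed.

Lemma ybar_lim (R : realType) n (G : 'M[R]_n) (p b d : R) (i : 'I_n) :
  (1%:M - (d * (1 + b)) *: G) \in unitmx ->
  (1%:M - (d * (1 - b)) *: G) \in unitmx ->
  (forall i j, (fun N => (((d * (1 + b)) *: G) ^+ N) i j) @ \oo --> 0) ->
  (forall i j, (fun N => (((d * (1 - b)) *: G) ^+ N) i j) @ \oo --> 0) ->
  (fun N => \sum_(0 <= k < N) d ^+ k * sum_entries (xbar G p p b (delta_mx i 0) 0 k))
    @ \oo --> cvec G b d i 0.
Proof.
move=> hup hum hcp hcm.
set Mp := (d * (1 + b)) *: G; set Mm := (d * (1 - b)) *: G.
have term : forall k, d ^+ k * sum_entries (xbar G p p b (delta_mx i 0) 0 k) =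
    2^-1 * (\sum_r (Mp ^+ k) r i + \sum_r (Mm ^+ k) r i).
  move=> k; have [h1 h2] := @ypm R n G p b (delta_mx i 0) k.
  have -> : xbar G p p b (delta_mx i 0) 0 k =
      2^-1 *: (((1 + b) *: G) ^+ k *m delta_mx i 0 + ((1 - b) *: G) ^+ k *m delta_mx i 0).
    rewrite -h1 -h2 /xbar; apply/matrixP => x y; rewrite !mxE; by field.
  rewrite /sum_entries mulr_sumr -big_split mulr_sumr; apply: eq_bigr => r _.
  rewrite -!colE !mxE /Mp /Mm !expZmx !mxE !exprMn /=; ring.
rewrite (_ : (fun N => _) = (fun N => 2^-1 * (\sum_r (\sum_(0 <= k < N) Mp ^+ k) r i +
    \sum_r (\sum_(0 <= k < N) Mm ^+ k) r i))); last first.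
  apply/funext => N; rewrite (eq_bigr _ (fun k _ => term k)) -mulr_sumr big_split /=.
  by congr (_ * (_ + _)); rewrite exchange_big /=; apply: eq_bigr => r _; rewrite summxE.
have -> : cvec G b d i 0 = 2^-1 * (\sum_r invmx (1%:M - Mp) r i + \sum_r invmx (1%:M - Mm) r i).
  rewrite /cvec !mxE /Mp /Mm !mulr_sumr -!big_split mulr_sumr; apply: eq_bigr => r _.
  rewrite !mxE !inv_tr /=; ring.
apply: cvgMl_tmp; apply: cvgD; apply: cvg_sum_ord => r.
  exact: series_inv.
exact: series_inv.
Qed.


Arguments unit_lemma {R m G L g}.
Arguments pow_cvg0 {R m G L g}.
Arguments xbar_cvg {R n G a p b d sb su}.
Arguments ybar_lim {R n G} p {b d} i.
Arguments xpair_lin {R n G a p b sb su e t k}.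

Lemma sqnorm_pert (R : realType) n (sb : 'cV[R]_n) i (t : R) :
  sqnorm2 (sb + t *: delta_mx i 0) = sqnorm2 sb + t * (2 * sb i 0) + t * t.
Proof.
rewrite /sqnorm2 (bigD1 i) //= [in RHS](bigD1 i) //=.
have -> : \sum_(j < n | j != i) (sb + t *: delta_mx i 0) j 0 ^+ 2 =
          \sum_(j < n | j != i) sb j 0 ^+ 2.
  by apply: eq_bigr => j hj; rewrite !mxE (negbTE hj) /= mulr0 addr0.
rewrite !mxE !eqxx /=; ring.
Qed.

Lemma sum_entriesD (R : realType) n (x y : 'cV[R]_n) (t : R) :
  sum_entries (x + t *: y) = sum_entries x + t * sum_entries y.
Proof.
by rewrite /sum_entries mulr_sumr -big_split; apply: eq_bigr => j _; rewrite !mxE.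
Qed.

Lemma ubar_deriv (R : realType) (n : nat) (hn : (0 < n)%N) (G : 'M[R]_n)
  (hG : forall i j, 0 <= G i j) (alpha p beta delta Lmax : R)
  (hap : p <= alpha) (hb0 : 0 <= beta) (hb1 : beta < 1)
  (hd0 : 0 < delta) (hd1 : delta < 1)
  (hL0 : 0 < Lmax) (hL1 : Lmax < (delta * (1 + beta))^-1)
  (hrho : spectral_radius_le G Lmax)
  (sb su : 'cV[R]_n) (hsb : forall i, 0 <= sb i 0) (hsu : forall i, 0 <= su i 0)
  (i : 'I_n) :
  is_derive (0 : R) (1 : R)
    (fun t : R => Ubar G alpha p beta delta (sb + t *: delta_mx i 0) su)
    (p * cvec G beta delta i 0 - sb i 0).
Proof.
case: n hn G hG hrho sb su hsb hsu i => [//|m] _ G hG hrho sb su hsb hsu i.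
have gp0 : 0 < delta * (1 + beta) by apply: mulr_gt0 => //; lra.
have gm0 : 0 < delta * (1 - beta) by apply: mulr_gt0 => //; lra.
have gpL : delta * (1 + beta) * Lmax < 1.
  by rewrite mulrC -ltr_pdivlMr // mul1r.
have gmL : delta * (1 - beta) * Lmax < 1.
  apply: le_lt_trans gpL; apply: ler_wpM2r; first exact: ltW.
  by apply: ler_wpM2l; [exact: ltW | lra].
have up := unit_lemma hrho gp0 gpL.
have um := unit_lemma hrho gm0 gmL.
have cp := pow_cvg0 hrho (ltW hL0) gp0 gpL.
have cm := pow_cvg0 hrho (ltW hL0) gm0 gmL.
have hS := xbar_cvg hG hap hb0 hd0 hd1 up cp hsb hsu.
have hT := ybar_lim p i up um cp cm.
set S := fun N => _ in hS.
set T := fun N => _ in hT.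
set LS := limn S.
set C := cvec G beta delta i 0.
have feq : (fun t : R => Ubar G alpha p beta delta (sb + t *: delta_mx i 0) su) =
    (fun t => (p * LS - 2^-1 * sqnorm2 sb) + t * (p * C - sb i 0) - 2^-1 * (t * t)).
  apply/funext => t; rewrite /Ubar sqnorm_pert.
  have -> : limn (fun N => \sum_(0 <= k < N) delta ^+ k *
      sum_entries (xbar G alpha p beta (sb + t *: delta_mx i 0) su k)) = LS + t * C.
    apply: cvg_lim => //.
    rewrite (_ : (fun N => _) = (fun N => S N + t * T N)); last first.
      apply/funext => N; rewrite /S /T mulr_sumr -big_split /=.
      apply: eq_bigr => k _.
      by rewrite /xbar xpair_lin /= sum_entriesD; ring.
    apply: cvgD; first exact: hS.
    exact: cvgMl_tmp.
  by field.
rewrite feq; apply: is_derive_eq.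
by rewrite scaler0 add0r mul1r !scale0r addr0 scaler0 subr0 add0r /GRing.scale /= mulr1.
Qed.

Lemma xunder_swap (R : realType) n (G : 'M[R]_n) a p b sb su k :
  xunder G a p b sb su k = xbar G a p b su sb k.
Proof. by rewrite /xunder /xbar xpair_swap. Qed.

Lemma uunder_ubar (R : realType) n (G : 'M[R]_n) a p b d sb su :
  Uunder G a p b d sb su = Ubar G a p b d su sb.
Proof.
rewrite /Uunder /Ubar; congr (_ * _ - _); congr (limn _).
by apply/funext => N; apply: eq_bigr => k _; rewrite xunder_swap.
Qed.

Local Close Scope classical_set_scope.

Theorem lemma1 (R : realType) (n : nat) (hn : (0 < n)%N) (G : 'M[R]_n)
  (hG : forall i j, 0 <= G i j) (alpha p beta delta Lmax : R)
  (hap : p <= alpha) (hb0 : 0 <= beta) (hb1 : beta < 1)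
  (hd0 : 0 < delta) (hd1 : delta < 1)
  (hL0 : 0 < Lmax) (hL1 : Lmax < (delta * (1 + beta))^-1)
  (hrho : spectral_radius_le G Lmax)
  (sb su : 'cV[R]_n) (hsb : forall i, 0 <= sb i 0) (hsu : forall i, 0 <= su i 0)
  (i : 'I_n) :
  is_derive (0 : R) (1 : R)
    (fun t : R => Ubar G alpha p beta delta (sb + t *: delta_mx i 0) su)
    (p * cvec G beta delta i 0 - sb i 0)
  /\
  is_derive (0 : R) (1 : R)
    (fun t : R => Uunder G alpha p beta delta sb (su + t *: delta_mx i 0))
    (p * cvec G beta delta i 0 - su i 0).
Proof.
split; first exact: (@ubar_deriv R n hn G hG alpha p beta delta Lmax hap hb0 hb1 hd0 hd1 hL0 hL1 hrho sb su hsb hsu i).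
rewrite (_ : (fun t : R => _) =
    (fun t : R => Ubar G alpha p beta delta (su + t *: delta_mx i 0) sb)); last first.
  by apply/funext => t; rewrite uunder_ubar.
exact: (@ubar_deriv R n hn G hG alpha p beta delta Lmax hap hb0 hb1 hd0 hd1 hL0 hL1 hrho su sb hsu hsb i).
Qed.
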